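(* Let $\mathcal{X}=\{x_k\}_{k=1}^m$ be a frame for a real or complex $n$-dimensional Hilbert space $\mathbb{H}^n$. Then the following are equivalent: (1) $\mathcal{X}$ is injective; (2) for every orthonormal basis $\mathcal{E}=\{e_j\}_{j=1}^n$ of $\mathbb{H}^n$, \[ \mathrm{span}\{(|\langle x_k,e_1\rangle|^2,|\langle x_k,e_2\rangle|^2,\dots,|\langle x_k,e_n\rangle|^2):k=1,\dots,m\}=\mathbb{R}^n.\]
   Context: A family $\{x_k\}$ of vectors in a Hilbert space is called injective if whenever a self-adjoint operator $T$ satisfies $\langle Tx_k,x_k\rangle=0$ for all $k$, then $T=0$. *)

(* Defs.v *)
From HB Require Import structures.
From mathcomp Require Import all_boot all_order all_algebra.
From mathcomp Require Import complex.
Set Implicit Arguments. Unset Strict Implicit. Unset Printing Implicit Defensive.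
Import Order.TTheory GRing.Theory Num.Theory.
Local Open Scope ring_scope.

Section Complex.
Variable R : rcfType.
Local Notation C := R[i].

Definition cdot n (u v : 'cV[C]_n) : C := \sum_(i < n) u i 0 * (v i 0)^*.

Definition cframe n m (x : 'I_m -> 'cV[C]_n) : Prop :=
  exists A B : C, [/\ 0 < A, 0 < B &
    forall f : 'cV[C]_n,
      A * cdot f f <= \sum_(k < m) `|cdot f (x k)| ^+ 2 <= B * cdot f f].

Definition cselfadj n (T : 'M[C]_n) : Prop := T = map_mx Num.conj (T^T).

Definition cinjective n m (x : 'I_m -> 'cV[C]_n) : Prop :=
  forall T : 'M[C]_n, cselfadj T ->
    (forall k, cdot (T *m x k) (x k) = 0) -> T = 0.

Definition cONB n (e : 'I_n -> 'cV[C]_n) : Prop :=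
  (forall i j, cdot (e i) (e j) = (i == j)%:R) /\
  row_full (\matrix_(i < n) (e i)^T).

Definition cabsmx n m (x : 'I_m -> 'cV[C]_n) (e : 'I_n -> 'cV[C]_n)
  : 'M[R]_(m, n) := \matrix_(k < m, j < n) complex.Re (`|cdot (x k) (e j)| ^+ 2).
End Complex.

Section Real.
Variable R : rcfType.

Definition rdot n (u v : 'cV[R]_n) : R := \sum_(i < n) u i 0 * v i 0.

Definition rframe n m (x : 'I_m -> 'cV[R]_n) : Prop :=
  exists A B : R, [/\ 0 < A, 0 < B &
    forall f : 'cV[R]_n,
      A * rdot f f <= \sum_(k < m) `|rdot f (x k)| ^+ 2 <= B * rdot f f].

Definition rselfadj n (T : 'M[R]_n) : Prop := T = T^T.

Definition rinjective n m (x : 'I_m -> 'cV[R]_n) : Prop :=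
  forall T : 'M[R]_n, rselfadj T ->
    (forall k, rdot (T *m x k) (x k) = 0) -> T = 0.

Definition rONB n (e : 'I_n -> 'cV[R]_n) : Prop :=
  (forall i j, rdot (e i) (e j) = (i == j)%:R) /\
  row_full (\matrix_(i < n) (e i)^T).

Definition rabsmx n m (x : 'I_m -> 'cV[R]_n) (e : 'I_n -> 'cV[R]_n)
  : 'M[R]_(m, n) := \matrix_(k < m, j < n) `|rdot (x k) (e j)| ^+ 2.
End Real.

(* Main.v *)
Require Import Defs.
From HB Require Import structures.
From mathcomp Require Import all_boot all_order all_algebra.
From mathcomp Require Import complex.
From mathcomp Require Import ring.
Import Order.TTheory GRing.Theory Num.Theory.
Local Open Scope ring_scope.

Set Implicit Arguments. Unset Strict Implicit. Unset Printing Implicit Defensive.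

Section S.
Variable R : rcfType.
Local Notation C := R[i].

Lemma cspec n (T : 'M[C]_n) : T = map_mx Num.conj T^T ->
  exists (P : 'M[C]_n) (d : 'rV[R]_n),
    P *m map_mx Num.conj P^T = 1%:M /\
    T = map_mx Num.conj P^T *m diag_mx (map_mx (real_complex R) d) *m P.
Proof.
move=> HT.
have Hh : T \is hermsymmx.
  by apply/is_hermitianmxP; rewrite expr0 scale1r.
have /orthomx_spectralP E := hermitian_normalmx Hh.
have Hu := spectral_unitarymx T.
have Hr := hermitian_spectral_diag_real Hh.
exists (spectralmx T), (map_mx (@complex.Re R) (spectral_diag T)); split.
  exact/unitarymxP.
rewrite [LHS]E invmx_unitary //; congr (_ *m diag_mx _ *m _).
apply/matrixP => i j; rewrite !mxE.
by rewrite RRe_real //; apply: (mxOverP Hr).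
Qed.
Lemma real_eigen n (T : 'M[R]_n.+1) : T^T = T ->
  exists c (v : 'rV[R]_n.+1), v != 0 /\ v *m T = c *: v.
Proof.
move=> HT.
set Tc := map_mx (real_complex R) T.
have HTc : Tc = map_mx Num.conj Tc^T.
  apply/matrixP => i j; rewrite !mxE.
  have /matrixP/(_ j i) := HT; rewrite !mxE => ->.
  by rewrite conj_Creal // complex_real.
have [P [d [HP E]]] := cspec HTc.
set c := d 0 0.
have : \det (T - c%:M) == 0.
  rewrite -(inj_eq (@complexI R)) rmorph0 -det_map_mx map_mxB /= map_scalar_mx /=.
  rewrite -/Tc E.
  have HP' := mulmx1C HP.
  set Pc := map_mx Num.conj P^T.
  set D := diag_mx _.
  have -> : Pc *m D *m P - (real_complex R c)%:M = Pc *m (D - (real_complex R c)%:M) *m P.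
    by rewrite mulmxBr mulmxBl mul_mx_scalar -scalemxAl HP' scalemx1.
  rewrite !det_mulmx.
  suff -> : \det (D - (real_complex R c)%:M) = 0 by rewrite mulr0 mul0r.
  rewrite /D -diag_const_mx -raddfB /= det_diag (bigD1 ord0) //= !mxE subrr mul0r //.
move/det0P => [v v0 Hv]; exists c, v; split => //.
by apply/eqP; rewrite -subr_eq0 -mul_mx_scalar -mulmxBr Hv.
Qed.
Lemma sqr_ge0' n (u : 'rV[R]_n) k : 0 <= u 0 k * u^T k 0.
Proof. by rewrite mxE -expr2 sqr_ge0. Qed.

Lemma dot_self_gt0 n (u : 'rV[R]_n) : u != 0 -> 0 < (u *m u^T) 0 0.
Proof.
move=> u0; rewrite mxE lt_def; apply/andP; split; last first.
  by apply: sumr_ge0 => j _; rewrite mxE -expr2 sqr_ge0.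
apply: contra u0 => /eqP /psumr_eq0P H; apply/eqP/matrixP => i j.
have := H (fun k _ => sqr_ge0' u k) j isT.
rewrite ord1 !mxE => /eqP; rewrite -expr2 sqrf_eq0 => /eqP -> //.
Qed.

Lemma unit_eigen n (T : 'M[R]_n.+1) : T^T = T ->
  exists c (v : 'rV[R]_n.+1), v *m v^T = 1%:M /\ v *m T = c *: v.
Proof.
move=> /real_eigen [c [v [v0 Hv]]].
have s0 := dot_self_gt0 v0.
set s := (v *m v^T) 0 0 in s0.
exists c, ((Num.sqrt s)^-1 *: v); split.
  rewrite linearZ /= -scalemxAr -scalemxAl scalerA [v *m _]mx11_scalar -/s.
  rewrite -mul_mx_scalar -scalar_mxM; congr (_%:M).
  rewrite -expr2 exprVn sqr_sqrtr ?ltW // divff //; exact: lt0r_neq0.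
by rewrite -(scalemxAl _ v T) Hv scalerA mulrC -scalerA.
Qed.

Lemma householder n (v : 'rV[R]_n.+1) : v *m v^T = 1%:M ->
  exists Q : 'M[R]_n.+1, [/\ Q^T = Q, Q *m Q = 1%:M & delta_mx 0 0 *m Q = v].
Proof.
move=> Hv.
set e : 'rV[R]_n.+1 := delta_mx 0 0.
have He : e *m e^T = 1%:M.
  rewrite [LHS]mx11_scalar; congr (_%:M); rewrite !mxE (bigD1 ord0) //= big1.
    by rewrite !mxE eqxx mulr1 addr0.
  by move=> j /negPf jn; rewrite !mxE jn andbF mulr0.
have Hvt : v *m e^T = e *m v^T.
  by rewrite -[LHS]trmxK trmx_mul trmxK [LHS]mx11_scalar [RHS]mx11_scalar mxE.
set w := e - v.
have [w0|w0] := eqVneq w 0.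
  exists 1%:M; split; first exact: trmx1.
    exact: mulmx1.
  by rewrite mulmx1; apply/eqP; rewrite -subr_eq0 -/w w0.
have s0 := dot_self_gt0 w0.
set s := (w *m w^T) 0 0 in s0.
set t := (e *m w^T) 0 0.
have Hs : s = 2 * t.
  have Hvw : v *m w^T = - (e *m w^T).
    by rewrite /w linearB /= !mulmxBr Hvt He Hv opprB.
  have : w *m w^T = e *m w^T *+ 2.
    by rewrite {1}/w mulmxBl Hvw opprK mulr2n.
  by move=> /matrixP /(_ 0 0); rewrite /s /t => ->; rewrite mxE mulr_natl.
set k := 2 / s.
exists (1%:M - k *: (w^T *m w)); split.
- by rewrite linearB /= linearZ /= trmx_mul trmxK trmx1.
- have HA : (w^T *m w) *m (w^T *m w) = s *: (w^T *m w).
    by rewrite mulmxA -(mulmxA w^T) [w *m w^T]mx11_scalar -/s mul_mx_scalar -scalemxAl.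
  move: HA; set A := w^T *m w => HA; clearbody A.
  rewrite mulmxBl !mulmxBr mul1mx mulmx1 -(scalemxAl k A) -(scalemxAr k A) HA scalerA.
  rewrite mul1mx scalerA.
  have -> : k * k * s = k + k.
    rewrite /k -mulrA divfK; last exact: lt0r_neq0.
    by rewrite mulr_natr mulr2n.
  by rewrite scalerDl opprB addrK subrK.
- rewrite mulmxBr mulmx1 -scalemxAr mulmxA [e *m w^T]mx11_scalar -/t mul_scalar_mx scalerA.
  have -> : k * t = 1.
    have t0 : t != 0 by apply: contraTneq s0 => t0; rewrite Hs t0 mulr0 ltxx.
    rewrite /k Hs invfM mulrA mulfV ?pnatr_eq0 // mul1r mulVf //.
  by rewrite scale1r /w opprB addrC subrK.
Qed.
Lemma rspec n (T : 'M[R]_n) : T^T = T ->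
  exists (E : 'M[R]_n) (d : 'rV[R]_n),
    E *m E^T = 1%:M /\ T = E^T *m diag_mx d *m E.
Proof.
elim: n T => [|n IH] T HT.
  exists 1%:M, 0; split; first by rewrite trmx1 mulmx1.
  by apply/matrixP => [[]].
have [c [v [Hv HvT]]] := unit_eigen HT.
have [Q [HQt HQQ HeQ]] := householder Hv.
pose T1 : 'M[R]_(1 + n) := Q *m T *m Q.
have HT1 : T1^T = T1 by rewrite /T1 !trmx_mul HQt HT mulmxA.
have He1 : usubmx (1%:M : 'M[R]_(1 + n)) = delta_mx 0 0.
  rewrite (scalar_mx_block 1 n 1) block_mxEv col_mxKu.
  apply/matrixP => i j; rewrite !mxE ord1.
  case: splitP => k /= Hk; rewrite !mxE.
    by rewrite [k]ord1 eqxx; have /eqP -> : j == 0 by rewrite -val_eqE /= Hk [k]ord1.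
  by have /negPf -> : j != 0 by rewrite -val_eqE /= Hk.
have HuQ : usubmx (Q : 'M_(1 + n)) = v.
  by rewrite -HeQ -[Q in LHS]mul1mx -mul_usub_mx He1.
have HvQ : v *m Q = delta_mx 0 0 by rewrite -HeQ -mulmxA HQQ mulmx1.
have HuT1 : usubmx T1 = row_mx (c%:M : 'M_1) 0.
  rewrite /T1 -!mul_usub_mx HuQ HvT -scalemxAl HvQ -He1.
  by rewrite (scalar_mx_block 1 n 1) block_mxEv col_mxKu scale_row_mx scaler0 scalemx1.
have Hul : ulsubmx T1 = c%:M by rewrite /ulsubmx HuT1 row_mxKl.
have Hur : ursubmx T1 = 0 by rewrite /ursubmx HuT1 row_mxKr.
have Hdl : dlsubmx T1 = 0 by rewrite -HT1 -trmx_ursub Hur trmx0.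
set T' := drsubmx T1.
have HT' : T'^T = T' by rewrite /T' trmx_drsub HT1.
have HT1b : T1 = block_mx c%:M 0 0 T' by rewrite -Hul -Hur -Hdl submxK.
have [E' [d' [HE' ET']]] := IH T' HT'.
pose B : 'M_(1 + n) := block_mx (1%:M : 'M_1) 0 0 E'.
have HB : B *m B^T = 1%:M.
  rewrite /B tr_block_mx !trmx0 trmx1.
  by rewrite mulmx_block !(mulmx0, mul0mx, mulmx1, addr0, add0r) HE' -scalar_mx_block.
have HBD : B^T *m diag_mx (row_mx (c%:M : 'rV_1) d') *m B = T1.
  rewrite /B tr_block_mx !trmx0 trmx1 diag_mx_row.
  have -> : diag_mx (c%:M : 'rV_1) = c%:M.
    by apply/matrixP => i j; rewrite !mxE !ord1.
  by rewrite !mulmx_block !(mulmx0, mul0mx, mulmx1, mul1mx, addr0, add0r) -ET' -HT1b.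
exists (B *m Q), (row_mx (c%:M : 'rV_1) d'); split.
  by rewrite trmx_mul HQt -mulmxA (mulmxA Q) HQQ mul1mx HB.
rewrite trmx_mul HQt.
rewrite mulmxA -(mulmxA Q) -(mulmxA Q) HBD.
by rewrite /T1 !mulmxA HQQ mul1mx -mulmxA HQQ mulmx1.
Qed.
Definition remx n (e : 'I_n -> 'cV[R]_n) : 'M[R]_n := \matrix_(j, l) e j l 0.

Lemma remx_mul n (e : 'I_n -> 'cV[R]_n) (x : 'cV[R]_n) j :
  (remx e *m x) j 0 = rdot x (e j).
Proof. by rewrite mxE /rdot; apply: eq_bigr => l _; rewrite mxE mulrC. Qed.

Lemma rdotE n (u v : 'cV[R]_n) : rdot u v = (v^T *m u) 0 0.
Proof. by rewrite mxE; apply: eq_bigr => l _; rewrite mxE mulrC. Qed.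

Lemma rdot_form n (E : 'M[R]_n) (a : 'rV[R]_n) (x : 'cV[R]_n) :
  rdot ((E^T *m diag_mx a *m E) *m x) x = \sum_j a 0 j * ((E *m x) j 0) ^+ 2.
Proof.
have -> : rdot ((E^T *m diag_mx a *m E) *m x) x =
   ((E *m x)^T *m diag_mx a *m (E *m x)) 0 0.
  by rewrite rdotE trmx_mul !mulmxA.
rewrite mxE; apply: eq_bigr => j _.
rewrite mul_mx_diag !mxE; ring.
Qed.

Lemma rabs_sq (z : R) : `|z| ^+ 2 = z ^+ 2.
Proof. by rewrite real_normK ?num_real. Qed.

Lemma notfull_ker m n (M : 'M[R]_(m, n)) : ~~ row_full M ->
  exists2 a : 'rV[R]_n, a != 0 & a *m M^T = 0.
Proof.
move=> Hnf.
have : kermx M^T != 0.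
  by rewrite kermx_eq0 /row_free mxrank_tr.
set K := kermx M^T => K0.
have [i Hi] : exists i, row i K != 0.
  apply/existsP; apply: contraR K0 => /existsPn H; apply/eqP/matrixP => i j.
  by have := H i; rewrite negbK => /eqP/matrixP/(_ 0 j); rewrite !mxE.
by exists (row i K) => //; rewrite -row_mul mulmx_ker row0.
Qed.

Lemma full_ker m n (M : 'M[R]_(m, n)) (a : 'cV[R]_n) : row_full M ->
  M *m a = 0 -> a = 0.
Proof.
by move=> /row_fullP [B HB] Ha; rewrite -[a]mul1mx -HB -mulmxA Ha mulmx0.
Qed.

Lemma real_part n m (x : 'I_m -> 'cV[R]_n) :
  rinjective x <-> forall e : 'I_n -> 'cV[R]_n, rONB e -> row_full (rabsmx x e).
Proof.
split.
- move=> Hinj e [Horth _]; apply: contraT => /notfull_ker [a a0 Ha].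
  set Em := remx e.
  have HE : Em *m Em^T = 1%:M.
    apply/matrixP => i j; rewrite !mxE -Horth /rdot; apply: eq_bigr => l _.
    by rewrite !mxE.
  have HT := Hinj (Em^T *m diag_mx a *m Em).
  have : Em^T *m diag_mx a *m Em = 0.
    apply: HT.
      by rewrite /rselfadj !trmx_mul tr_diag_mx trmxK mulmxA.
    move=> k; rewrite rdot_form.
    have Hk : (a *m (rabsmx x e)^T) 0 k = 0 by rewrite Ha mxE.
    rewrite -[RHS]Hk mxE.
    by apply: eq_bigr => j _; rewrite /Em remx_mul !mxE rabs_sq.
  move/(congr1 (fun X => Em *m X *m Em^T)).
  rewrite !mulmxA HE mul1mx -mulmxA HE mulmx1 mulmx0 mul0mx => Ha0.
  move: a0; have -> : a = 0; last by rewrite eqxx.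
  apply/matrixP => i j; have /matrixP/(_ j j) := Ha0.
  by rewrite !mxE eqxx mulr1n ord1.
- move=> H2 T HT Hk; apply/eqP; apply: contraT => T0.
  have [E [d [HE ET]]] := rspec (esym HT).
  pose e := fun j => (row j E)^T.
  have Em : remx e = E by apply/matrixP => i j; rewrite !mxE.
  have Hfull := H2 e.
  have : rONB e.
    split.
      move=> i j; have /matrixP/(_ i j) := HE; rewrite !mxE => <-.
      by apply: eq_bigr => l _; rewrite !mxE.
    have -> : \matrix_(i < n) (e i)^T = E by apply/matrixP => i j; rewrite !mxE.
    by apply/row_fullP; exists E^T; exact: mulmx1C.
  move/Hfull => Hf.
  have : d^T = 0.
    apply: (full_ker Hf); apply/matrixP => k i; rewrite ord1 !mxE.
    rewrite -[RHS](Hk k) ET rdot_form; apply: eq_bigr => j _.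
    by rewrite -Em remx_mul !mxE rabs_sq mulrC.
  move=> d0; move: T0; rewrite ET.
  have -> : d = 0 by rewrite -[d]trmxK d0 trmx0.
  by rewrite linear0 mulmx0 mul0mx eqxx.
Qed.
Definition adj m n (A : 'M[C]_(m, n)) : 'M[C]_(n, m) := map_mx Num.conj A^T.

Lemma adjM m n p (A : 'M[C]_(m, n)) (B : 'M[C]_(n, p)) : adj (A *m B) = adj B *m adj A.
Proof. by rewrite /adj trmx_mul map_mxM. Qed.

Lemma adjK m n (A : 'M[C]_(m, n)) : adj (adj A) = A.
Proof. by apply/matrixP => i j; rewrite !mxE conjCK. Qed.

Definition rc n (a : 'rV[R]_n) : 'rV[C]_n := map_mx (real_complex R) a.

Lemma conj_rc (r : R) : Num.conj (real_complex R r) = real_complex R r.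
Proof. by rewrite conj_Creal // complex_real. Qed.

Lemma adj_diag n (a : 'rV[R]_n) : adj (diag_mx (rc a)) = diag_mx (rc a).
Proof.
by apply/matrixP => i j; rewrite !mxE; case: eqVneq => [->|_]; rewrite ?mulr1n ?mulr0n ?conj_rc ?conjC0.
Qed.

Definition cmx n (e : 'I_n -> 'cV[C]_n) : 'M[C]_n := \matrix_(j, l) (e j l 0)^*.

Lemma cmx_mul n (e : 'I_n -> 'cV[C]_n) (x : 'cV[C]_n) j :
  (cmx e *m x) j 0 = cdot x (e j).
Proof. by rewrite mxE /cdot; apply: eq_bigr => l _; rewrite mxE mulrC. Qed.

Lemma cdotE n (u v : 'cV[C]_n) : cdot u v = (adj v *m u) 0 0.
Proof. by rewrite mxE; apply: eq_bigr => l _; rewrite !mxE mulrC. Qed.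

Lemma cdot_form n (P : 'M[C]_n) (a : 'rV[R]_n) (x : 'cV[C]_n) :
  cdot ((adj P *m diag_mx (rc a) *m P) *m x) x =
  \sum_j real_complex R (a 0 j) * `|(P *m x) j 0| ^+ 2.
Proof.
have -> : cdot ((adj P *m diag_mx (rc a) *m P) *m x) x =
   (adj (P *m x) *m diag_mx (rc a) *m (P *m x)) 0 0.
  by rewrite cdotE adjM !mulmxA.
rewrite mxE; apply: eq_bigr => j _.
rewrite mul_mx_diag !mxE normCK; ring.
Qed.

Lemma cabs_sq (z : C) : real_complex R (complex.Re (`|z| ^+ 2)) = `|z| ^+ 2.
Proof. by rewrite RRe_real // rpredX // normr_real. Qed.

Lemma complex_part n m (x : 'I_m -> 'cV[C]_n) :
  cinjective x <-> forall e : 'I_n -> 'cV[C]_n, cONB e -> row_full (cabsmx x e).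
Proof.
split.
- move=> Hinj e [Horth _]; apply: contraT => /notfull_ker [a a0 Ha].
  set Em := cmx e.
  have HE : Em *m adj Em = 1%:M.
    apply/matrixP => i j; rewrite !mxE eq_sym -Horth /cdot; apply: eq_bigr => l _.
    by rewrite !mxE conjCK mulrC.
  have HT := Hinj (adj Em *m diag_mx (rc a) *m Em).
  have : adj Em *m diag_mx (rc a) *m Em = 0.
    apply: HT.
      by rewrite /cselfadj -/(adj _) !adjM adjK adj_diag mulmxA.
    move=> k; rewrite cdot_form.
    have Hk : (a *m (cabsmx x e)^T) 0 k = 0 by rewrite Ha mxE.
    rewrite -(rmorph0 (real_complex R)) -[0 in RHS]Hk mxE rmorph_sum.
    by apply: eq_bigr => j _; rewrite /Em cmx_mul !mxE rmorphM; congr (_ * _); exact: (esym (cabs_sq _)).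
  move/(congr1 (fun X => Em *m X *m adj Em)).
  rewrite !mulmxA HE mul1mx -mulmxA HE mulmx1 mulmx0 mul0mx => Ha0.
  move: a0; have -> : a = 0; last by rewrite eqxx.
  apply/matrixP => i j; have /matrixP/(_ j j) := Ha0.
  rewrite !mxE eqxx mulr1n ord1 => /eqP; rewrite -(rmorph0 (real_complex R)).
  by move/eqP/complexI.
- move=> H2 T HT Hk; apply/eqP; apply: contraT => T0.
  have [P [d [HP ET]]] := cspec HT.
  pose e := fun j => \col_l (P j l)^*.
  have Em : cmx e = P by apply/matrixP => i j; rewrite !mxE conjCK.
  have Hfull := H2 e.
  have : cONB e.
    split.
      move=> i j; have /matrixP/(_ j i) := HP; rewrite !mxE eq_sym => <-.
      by apply: eq_bigr => l _; rewrite !mxE conjCK mulrC.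
    have -> : \matrix_(i < n) (e i)^T = map_mx Num.conj P.
      by apply/matrixP => i j; rewrite !mxE.
    apply/row_fullP; exists P^T; apply: mulmx1C.
    have := congr1 (map_mx Num.conj) HP.
    by rewrite map_mxM map_mx1 -map_mx_comp (map_mx_id (@conjCK _)).
  move/Hfull => Hf.
  have : d^T = 0.
    apply: (full_ker Hf); apply/matrixP => k i; rewrite ord1 !mxE.
    apply: (@complexI R); rewrite rmorph0 -(Hk k) -/(adj P) ET cdot_form rmorph_sum.
    by apply: eq_bigr => j _; rewrite -Em cmx_mul !mxE rmorphM mulrC; congr (_ * _); exact: cabs_sq.
  move=> d0; move: T0; rewrite ET.
  have -> : d = 0 by rewrite -[d]trmxK d0 trmx0.
  by rewrite /rc map_mx0 linear0 mulmx0 mul0mx eqxx.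
Qed.
End S.

Unset Implicit Arguments.

Theorem mainTheorem3 (R : rcfType) :
  (forall (n m : nat) (x : 'I_m -> 'cV[R]_n), rframe x ->
     (rinjective x <->
      forall e : 'I_n -> 'cV[R]_n, rONB e -> row_full (rabsmx x e)))
  /\
  (forall (n m : nat) (x : 'I_m -> 'cV[R[i]]_n), cframe x ->
     (cinjective x <->
      forall e : 'I_n -> 'cV[R[i]]_n, cONB e -> row_full (cabsmx x e))).
Proof.
split => n m x _; [exact: real_part | exact: complex_part].
Qed.
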